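(* Let $X$ be a random variable on a finite alphabet $\mathcal{X}$ with pmf $P_X$, let $\mathcal{S}$ be a finite set, and let $\delta,\eta,\nu_1>0$ be such that for all sufficiently large $N$ and every $s^N\in\mathcal{S}^N$, $\Pr\{X^N\in\tilde T^N[X,s^N]_{\delta,\eta}\}>1-2^{-N\nu_1}$, where $X^N=(X_1,\dots,X_N)$ is i.i.d. with pmf $P_X$. Let $R'>\nu_1$ and $L'=2^{NR'}$, and let $\mathbf{C}=(X^N(1),\dots,X^N(L'))$ be a random codebook whose $L'N$ letters are i.i.d. with pmf $P_X$. Then $\Pr\{\mathbf{C}\text{ is good with respect to }X\}>1-\epsilon_1$, where $\epsilon_1\to0$ as $N\to\infty$.
   Context: For $s^N\in\mathcal{S}^N$ and $a\in\mathcal{S}$, $\mathcal{I}(a:s^N)=\{1\le i\le N: s_i=a\}$, $\mu_a=|\mathcal{I}(a:s^N)|$, and $\mathcal{S}(s^N,\eta)=\{a\in\mathcal{S}:\mu_a>N\eta/|\mathcal{S}|\}$. For a pmf $P$ on a finite set $\mathcal{A}$, the $\delta$-letter typical set $T^n_\delta(P)$ is the set of $a^n\in\mathcal{A}^n$ with $|\frac1nN(b:a^n)-P(b)|\le\delta P(b)$ for all $b\in\mathcal{A}$, where $N(b:a^n)$ is the number of positions of $a^n$ equal to $b$. The set $\tilde T^N[X,s^N]_{\delta,\eta}$ consists of all $x^N\in\mathcal{X}^N$ with $P_X(x_i)>0$ for all $i$ and $x_{\mathcal{I}(a:s^N)}=(x_i)_{i\in\mathcal{I}(a:s^N)}\in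 T^{\mu_a}_\delta(P_X)$ for all $a\in\mathcal{S}(s^N,\eta)$. A codebook $\mathcal{C}=(x^N(l))_{l=1}^{L'}$ (an indexed list, repetitions allowed) is called good with respect to $X$ (with parameters $\delta,\eta,\nu_1$) if for every $s^N\in\mathcal{S}^N$ the number of indices $l$ with $x^N(l)\in\tilde T^N[X,s^N]_{\delta,\eta}$ exceeds $(1-2\cdot2^{-N\nu_1})L'$. *)

(* Defs.v *)
From mathcomp Require Import all_boot all_order all_algebra.
From mathcomp Require Import all_classical all_reals all_analysis.
Set Implicit Arguments. Unset Strict Implicit. Unset Printing Implicit Defensive.
Import Order.TTheory GRing.Theory Num.Theory.
Local Open Scope ring_scope.

Section Defs.
Variables (R : realType) (X S : finType).

Definition is_pmf (P : X -> R) : Prop := (forall x, 0 <= P x) /\ \sum_(x : X) P x = 1.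

Definition idx_of (N : nat) (a : S) (s : {ffun 'I_N -> S}) : seq 'I_N :=
  [seq i <- enum 'I_N | s i == a].

Definition mu (N : nat) (a : S) (s : {ffun 'I_N -> S}) : nat := size (idx_of a s).

Definition bigS (N : nat) (s : {ffun 'I_N -> S}) (eta : R) : {set S} :=
  [set a | (N%:R * eta / #|S|%:R) < (mu a s)%:R].

Definition letter_typical (P : X -> R) (delta : R) (xs : seq X) : bool :=
  [forall b : X, `| (count_mem b xs)%:R / (size xs)%:R - P b | <= delta * P b].

Definition tildeT (P : X -> R) (delta eta : R) (N : nat)
    (s : {ffun 'I_N -> S}) (x : {ffun 'I_N -> X}) : bool :=
  [forall i : 'I_N, 0 < P (x i)] &&
  [forall a in bigS s eta, letter_typical P delta [seq x i | i <- idx_of a s]].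

Definition PrN (P : X -> R) (N : nat) (A : pred {ffun 'I_N -> X}) : R :=
  \sum_(x : {ffun 'I_N -> X} | A x) \prod_(i < N) P (x i).

Definition good (P : X -> R) (delta eta nu1 : R) (N L' : nat)
    (C : {ffun 'I_L' -> {ffun 'I_N -> X}}) : bool :=
  [forall s : {ffun 'I_N -> S},
     (1 - 2 * (2 `^ (- (N%:R * nu1)))) * L'%:R
       < #|[set l : 'I_L' | tildeT P delta eta s (C l)]|%:R].

Definition PrCode (P : X -> R) (N L' : nat)
    (A : pred {ffun 'I_L' -> {ffun 'I_N -> X}}) : R :=
  \sum_(C : {ffun 'I_L' -> {ffun 'I_N -> X}} | A C) \prod_(l < L') \prod_(i < N) P (C l i).

Definition Lprime (Rp : R) (N : nat) : nat := Num.truncn (2 `^ (N%:R * Rp)).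

End Defs.

(* Main.v *)
Require Import Defs.
From mathcomp Require Import all_boot all_order all_algebra.
From mathcomp Require Import all_classical all_reals all_analysis.
From mathcomp Require Import ring lra.
Import Order.TTheory GRing.Theory Num.Theory.
Local Open Scope ring_scope.

Lemma sum_prod1 (R : realType) (I X : finType) (P : X -> R) :
  \sum_(x : X) P x = 1 ->
  \sum_(x : {ffun I -> X}) \prod_(i : I) P (x i) = 1.
Proof.
move=> h; rewrite -(bigA_distr_bigA (fun (i : I) (x : X) => P x)) /=.
by rewrite big1 // => i _; rewrite h.
Qed.
Lemma expect2 (R : realType) (T : finType) (w : T -> R) (B : pred T) (L : nat) :
  \sum_(C : {ffun 'I_L -> T}) (\prod_(l < L) w (C l)) * 2 ^+ #|[set l | B (C l)]|
  = (\sum_(x : T) w x * (if B x then 2 else 1)) ^+ L.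
Proof.
have e : forall C : {ffun 'I_L -> T}, 2 ^+ #|[set l | B (C l)]| =
   \prod_(l < L) (if B (C l) then 2 else 1) :> R.
  move=> C; rewrite -prodr_const big_mkcond /=.
  by apply: eq_bigr => l _; rewrite inE.
under eq_bigr do rewrite e -big_split /=.
rewrite -(bigA_distr_bigA (fun (l : 'I_L) (x : T) => w x * (if B x then 2 else 1))) /=.
by rewrite prodr_const card_ord.
Qed.
Lemma expR_ln2 (R : realType) : expR (ln (2 : R)) = 2.
Proof. by rewrite lnK // posrE. Qed.

Lemma markov2 (R : realType) (T : finType) (w : T -> R) (B : pred T) (L : nat) (k : R) :
  (forall x, 0 <= w x) ->
  \sum_(C : {ffun 'I_L -> T} | k <= #|[set l | B (C l)]|%:R) \prod_(l < L) w (C l)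
  <= \sum_(C : {ffun 'I_L -> T}) (\prod_(l < L) w (C l)) * 2 ^+ #|[set l | B (C l)]|
     / expR (k * ln 2).
Proof.
move=> w0; rewrite big_mkcond /=; apply: ler_sum => C _.
have W0 : 0 <= \prod_(l < L) w (C l) by apply: prodr_ge0.
have e0 := expR_gt0 (k * ln (2:R)).
case: ifP => hk; last by rewrite divr_ge0 // mulr_ge0 // exprn_ge0.
rewrite -mulrA ler_peMr // ler_pdivlMr // mul1r.
rewrite -[in X in _ <= X](expR_ln2 R) -expRM_natl ler_expR.
apply: ler_wpM2r => //.
by apply: ln_ge0; rewrite ler1n.
Qed.

Lemma ln2_gt (R : realType) : 1/2 < ln (2 : R).
Proof.
have h := @expR_gt1Dx R (- (1/2)) _.
have h2 : expR (1/2 : R) < 2.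
  have : 1 + - (1/2) < expR (- (1/2) : R) by apply: h; rewrite oppr_eq0.
  have e := expRxMexpNx_1 (1/2 : R).
  have p := expR_gt0 (1/2 : R).
  move=> hh; nra.
by rewrite -ltr_expR expR_ln2.
Qed.

Lemma analytic (R : realType) (K c d eps : R) : 0 <= K -> 0 < c -> 0 < d -> 0 < eps ->
  exists N1 : nat, forall N : nat, (N1 <= N)%N -> forall m : R,
    expR (N%:R * d) - 1 <= m -> K ^+ N * expR (- (c * m)) < eps.
Proof.
move=> K0 c0 d0 e0.
pose a := c * d ^+ 2 / 2.
have a0 : 0 < a by rewrite /a divr_gt0 // mulr_gt0 // exprn_gt0.
pose M := K + `|ln eps| + 1.
exists (Num.truncn (M / a)).+1 => N hN m hm.
have hNa : M / a < N%:R.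
  apply: (lt_le_trans (truncnS_gt _)); by rewrite ler_nat.
have N1 : 1 <= N%:R :> R by rewrite ler1n; apply: leq_trans hN.
have aN : M < a * N%:R by rewrite -ltr_pdivrMl // mulrC.
set y := N%:R * d.
have y0 : 0 <= y by rewrite /y mulr_ge0 // ltW.
have ey := expR_ge1Dxn 1 y0.
have hm2 : y ^+ 2 / 2 <= m.
  move: ey; rewrite /= (_ : (2`!)%:R = 2 :> R) // => ey; lra.
have hK : K ^+ N <= expR (N%:R * K).
  rewrite expRM_natl; apply: (lerXn2r N); rewrite ?nnegrE ?expR_ge0 //.
  have := expR_ge1Dx K; lra.
have hc : - (c * m) <= - (a * N%:R ^+ 2).
  rewrite lerN2 /a.
  have -> : c * d ^+ 2 / 2 * N%:R ^+ 2 = c * (y ^+ 2 / 2) by rewrite /y; field.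
  by rewrite ler_wpM2l // ltW.
apply: (le_lt_trans (y := expR (N%:R * K) * expR (- (a * N%:R ^+ 2)))).
  by apply: ler_pM; rewrite ?exprn_ge0 ?expR_ge0 ?ler_expR.

rewrite -expRD -[X in _ < X](@lnK R eps) ?posrE // ltr_expR.
have la : - ln eps <= `|ln eps| by rewrite -normrN ler_norm.
have A0 : 0 <= `|ln eps| by [].
have AN : `|ln eps| <= `|ln eps| * N%:R by rewrite ler_peMr.
have : M * N%:R <= a * N%:R * N%:R.
  by rewrite ler_wpM2r // ?ltW // (le_trans _ N1).
rewrite /M expr2; move: la A0 AN; generalize `|ln eps| => A; move=> *; nra.
Qed.

Lemma bad_exists (R : realType) (X S : finType) (P : X -> R) (delta eta nu1 : R)
    (N L : nat) (C : {ffun 'I_L -> {ffun 'I_N -> X}}) :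
  ~~ @good R X S P delta eta nu1 N L C ->
  exists s : {ffun 'I_N -> S},
    2 * (2 `^ (- (N%:R * nu1)) * L%:R) <=
      #|[set l | ~~ tildeT P delta eta s (C l)]|%:R.
Proof.
rewrite /good negb_forall => /existsP [s hs]; exists s.
move: hs; rewrite -leNgt => hs.
have hc := cardsC [set l | tildeT P delta eta s (C l)].
have e : ~: [set l | tildeT P delta eta s (C l)] =
          [set l | ~~ tildeT P delta eta s (C l)].
  by apply/setP => l; rewrite !inE.
rewrite e in hc.
move: hc hs; rewrite card_ord => hc.
have : (#|[set l | tildeT P delta eta s (C l)]|%:R +
        #|[set l | ~~ tildeT P delta eta s (C l)]|%:R = L%:R :> R)
  by rewrite -natrD hc.
move=> *; lra.
Qed.

Lemma per_s (R : realType) (X : finType) (P : X -> R) (N L : nat)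
   (T : pred {ffun 'I_N -> X}) (q : R) :
  is_pmf P -> 0 <= q -> 1 - q < PrN P T ->
  \sum_(C : {ffun 'I_L -> {ffun 'I_N -> X}} |
          2 * (q * L%:R) <= #|[set l | ~~ T (C l)]|%:R)
      \prod_(l < L) \prod_(i < N) P (C l i)
   <= expR (q * L%:R) / expR (2 * (q * L%:R) * ln 2).
Proof.
move=> [P0 P1] q0 hT.
have w0 : forall x : {ffun 'I_N -> X}, 0 <= \prod_(i < N) P (x i).
  by move=> x; apply: prodr_ge0.
have hm := (@markov2 R {ffun 'I_N -> X} (fun x : {ffun 'I_N -> X} => \prod_(i < N) P (x i)) (fun x => ~~ T x) L (2 * (q * L%:R)) w0).
rewrite /= in hm.
apply: (le_trans hm).
rewrite -mulr_suml.
rewrite (@expect2 R {ffun 'I_N -> X} (fun x : {ffun 'I_N -> X} => \prod_(i < N) P (x i)) (fun x => ~~ T x) L).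
have base : \sum_(x : {ffun 'I_N -> X}) \prod_(i < N) P (x i) * (if ~~ T x then 2 else 1)
   = 2 - PrN P T.
  rewrite /PrN big_mkcond /=.
  transitivity (\sum_(x : {ffun 'I_N -> X}) (2 * \prod_(i < N) P (x i)
       - (if T x then \prod_(i < N) P (x i) else 0))).
    by apply: eq_bigr => x _; case: (T x) => /=; ring.
  by rewrite sumrB -mulr_sumr (@sum_prod1 R 'I_N X P P1) mulr1 [in RHS]big_mkcond.
rewrite base; apply: ler_wpM2r; first by rewrite invr_ge0 expR_ge0.
have b0 : 0 <= 2 - PrN P T.
  by rewrite -base; apply: sumr_ge0 => x _; apply: mulr_ge0 => //; case: ifP.
apply: (le_trans (y := (expR q) ^+ L)); last by rewrite mulrC expRM_natl.
apply: lerXn2r; rewrite ?nnegrE ?expR_ge0 //.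
have := expR_ge1Dx q; lra.
Qed.

Theorem lemma1 (R : realType) (X S : finType) (P : X -> R)
    (delta eta nu1 Rp : R) :
  is_pmf P ->
  0 < delta -> 0 < eta -> 0 < nu1 ->
  (exists N0 : nat, forall N : nat, (N0 <= N)%N ->
     forall s : {ffun 'I_N -> S},
       1 - 2 `^ (- (N%:R * nu1)) < PrN P (tildeT P delta eta s)) ->
  nu1 < Rp ->
  forall eps : R, 0 < eps ->
  exists N1 : nat, forall N : nat, (N1 <= N)%N ->
    1 - eps < PrCode P (@good R X S P delta eta nu1 N (Lprime Rp N)).
Proof.
move=> pmf d0 e0 n0 [N0 HN0] nR eps eps0.
have L2g := ln2_gt R.
have c0 : 0 < 2 * ln (2:R) - 1 by lra.
have dd : 0 < (Rp - nu1) * ln (2:R) by apply: mulr_gt0; lra.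
have [N1 HN1] := @analytic R #|S|%:R (2 * ln 2 - 1) ((Rp - nu1) * ln 2) eps
   (ler0n _ _) c0 dd eps0.
exists (maxn N0 N1) => N hN.
have hN0 : (N0 <= N)%N by apply: leq_trans hN; rewrite leq_maxl.
have hN1 : (N1 <= N)%N by apply: leq_trans hN; rewrite leq_maxr.
have p2 : forall x : R, 2 `^ x = expR (x * ln 2).
  by move=> x; rewrite /powR pnatr_eq0.
set q := 2 `^ (- (N%:R * nu1)).
have qE : q = expR (- (N%:R * nu1) * ln 2) by rewrite /q p2.
set L := Lprime Rp N.
have hL : expR (N%:R * Rp * ln 2) - 1 <= L%:R.
  rewrite /L /Lprime; have := truncnS_gt (2 `^ (N%:R * Rp)).
  by rewrite p2 -addn1 natrD; lra.
have q0 : 0 <= q by rewrite qE expR_ge0.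
have q1 : q <= 1.
  rewrite qE expR_le1 mulNr oppr_le0; apply: mulr_ge0; last by apply: ln_ge0; rewrite ler1n.
  by apply: mulr_ge0 => //; apply: ltW.
set m := q * L%:R.
have hm : expR (N%:R * ((Rp - nu1) * ln 2)) - 1 <= m.
  have -> : expR (N%:R * ((Rp - nu1) * ln 2)) = q * expR (N%:R * Rp * ln 2).
    by rewrite qE -expRD; congr expR; ring.
  rewrite /m.
  have : q * (expR (N%:R * Rp * ln 2) - 1) <= q * L%:R by apply: ler_wpM2l.
  nra.
have key := HN1 N hN1 m hm.
have P0 := pmf.1.
have W0 : forall C : {ffun 'I_L -> {ffun 'I_N -> X}},
    0 <= \prod_(l < L) \prod_(i < N) P (C l i).
  by move=> C; apply: prodr_ge0 => l _; apply: prodr_ge0 => i _.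
have tot : \sum_(C : {ffun 'I_L -> {ffun 'I_N -> X}}) \prod_(l < L) \prod_(i < N) P (C l i) = 1.
  apply: (@sum_prod1 R 'I_L {ffun 'I_N -> X} (fun x => \prod_(i < N) P (x i))).
  exact: (@sum_prod1 R 'I_N X P pmf.2).
rewrite /PrCode.
set G := @good R X S P delta eta nu1 N L.
have hsplit : \sum_(C | G C) \prod_(l < L) \prod_(i < N) P (C l i)
   + \sum_(C | ~~ G C) \prod_(l < L) \prod_(i < N) P (C l i) = 1.
  by rewrite -[in RHS]tot [RHS](bigID G) /=.
have hbad : \sum_(C | ~~ G C) \prod_(l < L) \prod_(i < N) P (C l i)
    <= #|S|%:R ^+ N * expR (- ((2 * ln 2 - 1) * m)).
  apply: (le_trans (y := \sum_(s : {ffun 'I_N -> S})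
     \sum_(C : {ffun 'I_L -> {ffun 'I_N -> X}} |
        2 * m <= #|[set l | ~~ tildeT P delta eta s (C l)]|%:R)
      \prod_(l < L) \prod_(i < N) P (C l i))).
    apply: (le_trans (y := \sum_(C : {ffun 'I_L -> {ffun 'I_N -> X}})
      \sum_(s : {ffun 'I_N -> S})
        (if 2 * m <= #|[set l | ~~ tildeT P delta eta s (C l)]|%:R
         then \prod_(l < L) \prod_(i < N) P (C l i) else 0))).
      rewrite big_mkcond /=; apply: ler_sum => C _.
      case: ifP => hg; last by apply: sumr_ge0 => s _; case: ifP.
      have [s hs] := @bad_exists R X S P delta eta nu1 N L C hg.
      have hs' : 2 * m <= #|[set l | ~~ tildeT P delta eta s (C l)]|%:R := hs.
      rewrite (bigD1 s) //= hs' lerDl.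
      by apply: sumr_ge0 => s' _; case: ifP.
    rewrite exchange_big /=; apply: ler_sum => s _.
    by rewrite [leRHS]big_mkcond.
  apply: (le_trans (y := \sum_(s : {ffun 'I_N -> S})
     expR (q * L%:R) / expR (2 * (q * L%:R) * ln 2))).
    apply: ler_sum => s _.
    exact: (@per_s R X P N L (tildeT P delta eta s) q pmf q0 (HN0 N hN0 s)).
  rewrite sumr_const card_ffun card_ord -(mulr_natl (expR _ / expR _) (#|S| ^ N)) natrX.
  rewrite -expRB; apply: ler_wpM2l; first by rewrite exprn_ge0.
  by rewrite le_eqVlt; apply/orP; left; apply/eqP; congr expR; rewrite /m; ring.
lra.
Qed.
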